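(* Let $(X,e\colon X\to M\otimes X)$ be a coalgebra for $F$ on $\mathbf{Met_3}^{C}$ and let $f\colon X\to S$ be given by $f(x)=\lim_{n\to\infty}\theta_n(x)$, where for $x\in X$: $\chi_0=x$, $\chi_n=(M^{n-1}\otimes e)(\chi_{n-1})$, $m_0,m_1,\ldots\in M$ are chosen with $\chi_n=m_0\otimes\cdots\otimes m_{n-1}\otimes x_n$ for all $n$, and $\theta_n(x)=m_0\otimes\cdots\otimes m_{n-1}\otimes z\in G$ for a fixed $z\in\{T,L,R\}$ (this limit exists and is independent of the choices). Then $f$ is continuous, and is therefore a morphism in $\mathbf{Met_3}^{C}$.
   Context: A tripointed metric space is a set with three distinct points $T,L,R$ and a metric bounded by $1$ in which $T,L,R$ have pairwise distance $1$. $\mathbf{Met_3}^{C}$: tripointed metric spaces with continuous maps preserving $T,L,R$. Let $M=\{a,b,c\}$. $M\times X$ has metric $\tfrac12d(x,y)$ within a copy and $1$ between copies; $M\otimes X$ is the quotient metric space by the equivalence relation generated by $(b,T)\sim(a,L)$, $(a,R)\sim(c,T)$, $(c,L)\sim(b,R)$, elements $m\otimes x$, distinguished points $a\otimes T,b\otimes L,c\otimes R$; $F=M\otimes-$, $(M\otimes f)(m\otimes x)=m\otimes f(x)$; $M^n\otimes-$ is the $n$-fold iterate. A coalgebra is $(X,e\colon X\to FX)$. With $I=\{T,L,R\}$ discrete and $!\colon I\to FI$ ($T\mapsto a\otimes T$, $L\mapsto b\otimes L$, $R\mapsto c\otimes R$), $G$ is the metric union of the chain of isometric embeddings $I\to FI\to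 F^2I\to\cdots$ (elements: expressions $m_0\otimes\cdots\otimes m_{n-1}\otimes z$ modulo induced identifications). $S$ is the Cauchy completion of $G$, with distinguished points $T,L,R$. *)

(* Defs.v *)
From Stdlib Require Import Reals Relations ClassicalEpsilon.
From Coquelicot Require Import Rbar Lub Lim_seq.
Open Scope R_scope.

Record Met3 := mkMet3 {
  car :> Type;
  mdist : car -> car -> R;
  tT : car; tL : car; tR : car }.
Arguments mdist {m} _ _.
Arguments tT {m}. Arguments tL {m}. Arguments tR {m}.

Definition is_met3 (X : Met3) : Prop :=
  (forall x y : X, 0 <= mdist x y <= 1) /\
  (forall x y : X, mdist x y = 0 <-> x = y) /\
  (forall x y : X, mdist x y = mdist y x) /\
  (forall x y z : X, mdist x z <= mdist x y + mdist y z) /\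
  mdist (@tT X) (@tL X) = 1 /\ mdist (@tL X) (@tR X) = 1 /\ mdist (@tT X) (@tR X) = 1.

Definition continuous {X Y : Met3} (f : X -> Y) : Prop :=
  forall x eps, 0 < eps -> exists delta, 0 < delta /\
    forall y, mdist x y < delta -> mdist (f x) (f y) < eps.

Definition preserves {X Y : Met3} (f : X -> Y) : Prop :=
  f tT = tT /\ f tL = tL /\ f tR = tR.

(* Metric quotient (metric identification) of a pseudometric on A:     *)
(* the points are the classes {b | p a b = 0}.  The distance is 0 on   *)
Definition Quot (A : Type) (p : A -> A -> R) : Type :=
  {P : A -> Prop | exists a, forall b, P b <-> p a b = 0}.

Definition cls {A : Type} (p : A -> A -> R) (a : A) : Quot A p :=
  exist _ (fun b => p a b = 0) (ex_intro _ a (fun b => iff_refl _)).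

Definition rep {A : Type} {p : A -> A -> R} (P : Quot A p) : A :=
  proj1_sig (constructive_indefinite_description _ (proj2_sig P)).

Definition qdist {A : Type} {p : A -> A -> R} (P Q : Quot A p) : R :=
  if excluded_middle_informative (P = Q) then 0 else p (rep P) (rep Q).

Lemma qdist_refl {A : Type} {p : A -> A -> R} (P : Quot A p) : qdist P P = 0.
Proof.
  unfold qdist; destruct (excluded_middle_informative (P = P)) as [_|h];
    [reflexivity | exfalso; apply h; reflexivity].
Qed.

Inductive M3 := ma | mb | mc.

Definition M3_eqb (m n : M3) : bool :=
  match m, n with ma, ma | mb, mb | mc, mc => true | _, _ => false end.

Section Tensor.
Variable Y : Met3.

Definition dprod (p q : M3 * Y) : R :=
  if M3_eqb (fst p) (fst q) then / 2 * mdist (snd p) (snd q) else 1.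

Definition glue0 (p q : M3 * Y) : Prop :=
  (p = (mb, tT) /\ q = (ma, tL)) \/
  (p = (ma, tR) /\ q = (mc, tT)) \/
  (p = (mc, tL) /\ q = (mb, tR)).

Definition glue : relation (M3 * Y) := clos_refl_sym_trans _ glue0.

(* chains p = p_0, q_0 ~ p_1, q_1 ~ ... ~ p_k, q_k = r with cost sum d(p_i,q_i) *)
Inductive chain : M3 * Y -> M3 * Y -> R -> Prop :=
| chain_one p r : chain p r (dprod p r)
| chain_cons p q p' r c : glue q p' -> chain p' r c -> chain p r (dprod p q + c).

Definition pglue (p r : M3 * Y) : R := real (Glb_Rbar (fun c => chain p r c)).
End Tensor.

Definition F (Y : Met3) : Met3 :=
  mkMet3 (Quot (M3 * Y) (pglue Y)) qdist
    (cls (pglue Y) (ma, tT)) (cls (pglue Y) (mb, tL)) (cls (pglue Y) (mc, tR)).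

Definition tensor {Y : Met3} (m : M3) (y : Y) : F Y := cls (pglue Y) (m, y).

Definition Fmap {Y Z : Met3} (g : Y -> Z) (u : F Y) : F Z :=
  tensor (fst (rep u)) (g (snd (rep u))).

Fixpoint Fiter (n : nat) (Y : Met3) : Met3 :=
  match n with O => Y | S k => Fiter k (F Y) end.

Fixpoint Fmap_iter (n : nat) {Y Z : Met3} (g : Y -> Z) : Fiter n Y -> Fiter n Z :=
  match n with O => g | S k => Fmap_iter k (Fmap g) end.

(* m_0 (x) ... (x) m_(n-1) (x) y *)
Fixpoint tens (m : nat -> M3) (n : nat) {Y : Met3} (y : Y) : Fiter n Y :=
  match n with O => y | S k => tens m k (tensor (m k) y) end.

Fixpoint chi {X : Met3} (e : X -> F X) (x : X) (n : nat) : Fiter n X :=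
  match n with O => x | S k => Fmap_iter k e (chi e x k) end.

Inductive P3 := T | L | Rp.

Definition P3_eqb (x y : P3) : bool :=
  match x, y with T, T | L, L | Rp, Rp => true | _, _ => false end.

Definition I : Met3 :=
  mkMet3 P3 (fun x y => if P3_eqb x y then 0 else 1) T L Rp.

Definition bang (x : I) : F I :=
  match x with T => @tensor I ma T | L => @tensor I mb L | Rp => @tensor I mc Rp end.

Fixpoint lift (k n : nat) (u : Fiter n I) : Fiter (k + n)%nat I :=
  match k with O => u | S j => Fmap_iter (j + n)%nat bang (lift j n u) end.

Definition Gpre : Type := {n : nat & car (Fiter n I)}.

(* distance in the metric union: compare in a common F^N I *)
Definition pG (u v : Gpre) : R :=
  match u, v with
  | existT n x, existT m y =>
      mdist (lift m n x)
        (eq_rect (n + m)%nat (fun N => car (Fiter N I)) (lift n m y) (m + n)%nat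
           (PeanoNat.Nat.add_comm n m))
  end.

Definition Gel (n : nat) (x : Fiter n I) : Gpre :=
  existT (fun k => car (Fiter k I)) n x.

Definition G : Met3 :=
  mkMet3 (Quot Gpre pG) qdist
    (cls pG (Gel 0 T)) (cls pG (Gel 0 L)) (cls pG (Gel 0 Rp)).

Definition cauchyG (s : nat -> G) : Prop :=
  forall eps, 0 < eps -> exists N, forall n k, (N <= n)%nat -> (N <= k)%nat ->
    mdist (s n) (s k) < eps.

Definition CauchyG : Type := {s : nat -> G | cauchyG s}.

Definition dCS (s t : CauchyG) : R :=
  real (Lim_seq (fun n => mdist (proj1_sig s n) (proj1_sig t n))).

Lemma const_cauchyG (x : G) : cauchyG (fun _ => x).
Proof.
  intros eps Heps; exists O; intros n k _ _; simpl.
  rewrite qdist_refl; exact Heps.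
Qed.

Definition jS (x : G) : Quot CauchyG dCS :=
  cls dCS (exist _ (fun _ => x) (const_cauchyG x)).

Definition S : Met3 :=
  mkMet3 (Quot CauchyG dCS) qdist (jS tT) (jS tL) (jS tR).

Definition theta (m : nat -> M3) (z : P3) (n : nat) : G :=
  cls pG (Gel n (tens m n (z : I))).

(* Main.v *)
Require Import Defs.
From Stdlib Require Import Reals.
From Stdlib Require Import Lra Lia Relations ClassicalEpsilon Classical.
From Stdlib Require Import FunctionalExtensionality PropExtensionality ProofIrrelevance.
From Coquelicot Require Import Rbar Lub Lim_seq.
Open Scope R_scope.

Definition psm {A : Type} (p : A -> A -> R) : Prop :=
  (forall a, p a a = 0) /\ (forall a b, p a b = p b a) /\
  (forall a b c, p a c <= p a b + p b c).

Section QuotLemmas.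
Context {A : Type} (p : A -> A -> R) (Hp : psm p).

Lemma psm_nonneg a b : 0 <= p a b.
Proof.
  pose proof Hp as [H0 [Hs Ht]].
  pose proof (Ht a b a). rewrite H0, (Hs b a) in H. lra.
Qed.

Lemma cls_eq a b : p a b = 0 -> cls p a = cls p b.
Proof.
  pose proof Hp as [H0 [Hs Ht]]. intros Hab.
  unfold cls.
  assert (E : (fun c => p a c = 0) = (fun c => p b c = 0)).
  { apply functional_extensionality; intro c; apply propositional_extensionality.
    pose proof (psm_nonneg a c). pose proof (psm_nonneg b c).
    pose proof (Ht a b c). pose proof (Ht b a c). assert (p b a = 0) by (rewrite Hs; exact Hab).
    split; intro; lra. }
  apply eq_sig_hprop.
  - intros; apply proof_irrelevance.
  - simpl. exact E.
Qed.

Lemma cls_inj a b : cls p a = cls p b -> p a b = 0.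
Proof.
  pose proof Hp as [H0 [Hs Ht]]. intro E.
  apply (f_equal (fun P => proj1_sig P)) in E. simpl in E.
  assert (H := f_equal (fun f => f a) E). simpl in H.
  rewrite Hs. rewrite <- H. apply H0.
Qed.

Lemma rep_spec (P : Quot A p) b : proj1_sig P b <-> p (rep P) b = 0.
Proof.
  unfold rep. destruct (constructive_indefinite_description _ _) as [x Hx]. simpl.
  apply Hx.
Qed.

Lemma cls_rep (P : Quot A p) : cls p (rep P) = P.
Proof.
  apply eq_sig_hprop.
  - intros; apply proof_irrelevance.
  - simpl. apply functional_extensionality; intro c; apply propositional_extensionality.
    rewrite rep_spec. tauto.
Qed.

Lemma rep_cls a : p (rep (cls p a)) a = 0.
Proof.
  pose proof Hp as [H0 [Hs Ht]].
  apply (rep_spec (cls p a) a). simpl. apply H0.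
Qed.

Lemma qdist_cls a b : qdist (cls p a) (cls p b) = p a b.
Proof.
  pose proof Hp as [H0 [Hs Ht]].
  unfold qdist. destruct (excluded_middle_informative _) as [E|NE].
  - symmetry. apply cls_inj. exact E.
  - pose proof (rep_cls a) as Ha. pose proof (rep_cls b) as Hb.
    set (ra := rep (cls p a)) in *. set (rb := rep (cls p b)) in *.
    pose proof (Ht ra a rb). pose proof (Ht a b rb). pose proof (Ht a ra b).
    pose proof (Ht ra rb b). rewrite (Hs a ra) in *. rewrite (Hs b rb) in *.
    lra.
Qed.

Lemma qdist_rep (P Q : Quot A p) : qdist P Q = p (rep P) (rep Q).
Proof.
  rewrite <- (cls_rep P) at 1. rewrite <- (cls_rep Q) at 1. apply qdist_cls.
Qed.

Lemma qdist_psm : psm (@qdist A p).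
Proof.
  pose proof Hp as [H0 [Hs Ht]].
  split; [|split]; intros; rewrite ?qdist_rep; auto.
Qed.

Lemma qdist_nonneg (P Q : Quot A p) : 0 <= qdist P Q.
Proof. rewrite qdist_rep. apply psm_nonneg. Qed.

Lemma qdist_def (P Q : Quot A p) : qdist P Q = 0 -> P = Q.
Proof.
  rewrite qdist_rep. intro H. rewrite <- (cls_rep P), <- (cls_rep Q).
  apply cls_eq; auto.
Qed.

Lemma qdist_eq0 (P : Quot A p) : qdist P P = 0.
Proof. apply qdist_refl. Qed.

End QuotLemmas.

Lemma M3_eqb_true m n : M3_eqb m n = true -> m = n.
Proof. destruct m, n; simpl; congruence. Qed.
Lemma M3_eqb_refl m : M3_eqb m m = true.
Proof. destruct m; reflexivity. Qed.
Lemma M3_eqb_sym m n : M3_eqb m n = M3_eqb n m.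
Proof. destruct m, n; reflexivity. Qed.

Lemma Rmin_Rle (x y c : R) : Rmin x y <= c <-> x <= c \/ y <= c.
Proof. unfold Rmin; destruct (Rle_dec x y); split; intros; try lra; destruct H; lra. Qed.

Ltac solve_rmin := first [ lra | apply Rmin_Rle; first [left; solve_rmin | right; solve_rmin] ].

Section FMetric.
Variable Y : Met3.
Hypothesis HY : is_met3 Y.

Lemma md_nonneg (x y : Y) : 0 <= mdist x y.
Proof. apply HY. Qed.
Lemma md_le1 (x y : Y) : mdist x y <= 1.
Proof. apply HY. Qed.
Lemma md_refl (x : Y) : mdist x x = 0.
Proof. apply HY. reflexivity. Qed.
Lemma md_zero (x y : Y) : mdist x y = 0 -> x = y.
Proof. apply HY. Qed.
Lemma md_sym (x y : Y) : mdist x y = mdist y x.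
Proof. apply HY. Qed.
Lemma md_tri (x y z : Y) : mdist x z <= mdist x y + mdist y z.
Proof. apply HY. Qed.
Lemma md_TL : mdist (@tT Y) tL = 1. Proof. apply HY. Qed.
Lemma md_LR : mdist (@tL Y) tR = 1. Proof. apply HY. Qed.
Lemma md_TR : mdist (@tT Y) tR = 1. Proof. apply HY. Qed.
Lemma md_LT : mdist (@tL Y) tT = 1. Proof. rewrite md_sym; apply HY. Qed.
Lemma md_RL : mdist (@tR Y) tL = 1. Proof. rewrite md_sym; apply HY. Qed.
Lemma md_RT : mdist (@tR Y) tT = 1. Proof. rewrite md_sym; apply HY. Qed.

Lemma neqTL : @tT Y <> tL.
Proof. intro E. pose proof md_TL. rewrite E, md_refl in H. lra. Qed.
Lemma neqLR : @tL Y <> tR.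
Proof. intro E. pose proof md_LR. rewrite E, md_refl in H. lra. Qed.
Lemma neqTR : @tT Y <> tR.
Proof. intro E. pose proof md_TR. rewrite E, md_refl in H. lra. Qed.

Notation dp := (dprod Y).

Lemma dp_nonneg p q : 0 <= dp p q.
Proof. unfold dprod. destruct (M3_eqb _ _). pose proof (md_nonneg (snd p) (snd q)). lra. lra. Qed.
Lemma dp_le1 p q : dp p q <= 1.
Proof. unfold dprod. destruct (M3_eqb _ _). pose proof (md_le1 (snd p) (snd q)). lra. lra. Qed.
Lemma dp_refl p : dp p p = 0.
Proof. unfold dprod. rewrite M3_eqb_refl, md_refl. lra. Qed.
Lemma dp_sym p q : dp p q = dp q p.
Proof. unfold dprod. rewrite M3_eqb_sym. destruct (M3_eqb _ _); auto. rewrite md_sym; auto. Qed.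
Lemma dp_tri p q r : dp p r <= dp p q + dp q r.
Proof.
  unfold dprod.
  destruct (M3_eqb (fst p) (fst r)) eqn:E1;
  destruct (M3_eqb (fst p) (fst q)) eqn:E2;
  destruct (M3_eqb (fst q) (fst r)) eqn:E3;
  pose proof (md_nonneg (snd p) (snd q)); pose proof (md_nonneg (snd q) (snd r));
  pose proof (md_nonneg (snd p) (snd r)); pose proof (md_le1 (snd p) (snd r));
  pose proof (md_le1 (snd p) (snd q)); pose proof (md_le1 (snd q) (snd r));
  pose proof (md_tri (snd p) (snd q) (snd r)); try lra.
  apply M3_eqb_true in E2. apply M3_eqb_true in E3. rewrite E2, E3, M3_eqb_refl in E1. discriminate.
Qed.
Lemma dp_zero p q : dp p q = 0 -> p = q.
Proof.
  unfold dprod. destruct (M3_eqb _ _) eqn:E.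
  - intro H. apply M3_eqb_true in E. assert (mdist (snd p) (snd q) = 0) by lra.
    apply md_zero in H0. destruct p, q; simpl in *; congruence.
  - lra.
Qed.
Lemma dp_same a y y' : dp (a, y) (a, y') = / 2 * mdist y y'.
Proof. unfold dprod. simpl. rewrite M3_eqb_refl. reflexivity. Qed.

Lemma chain_cost p r c c' : chain Y p r c -> c = c' -> chain Y p r c'.
Proof. intros H ->; exact H. Qed.

Lemma chain_nonneg p r c : chain Y p r c -> 0 <= c.
Proof.
  induction 1. apply dp_nonneg. pose proof (dp_nonneg p q). lra.
Qed.

Lemma chain_app p q c1 : chain Y p q c1 -> forall q' r c2, glue Y q q' -> chain Y q' r c2 ->
  chain Y p r (c1 + c2).
Proof.
  induction 1; intros.
  - eapply chain_cons; eauto.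
  - eapply chain_cost. eapply chain_cons. exact H. eapply IHchain; eauto. ring.
Qed.

Lemma glue_refl p : glue Y p p.
Proof. apply rst_refl. Qed.
Lemma glue_sym p q : glue Y p q -> glue Y q p.
Proof. apply rst_sym. Qed.

Lemma chain_rev p r c : chain Y p r c -> chain Y r p c.
Proof.
  induction 1.
  - rewrite dp_sym. apply chain_one.
  - eapply chain_cost. eapply chain_app. exact IHchain. apply glue_sym; exact H.
    apply chain_one. rewrite dp_sym. ring.
Qed.

Lemma pglue_finite p r : Glb_Rbar (fun c => chain Y p r c) = Finite (pglue Y p r).
Proof.
  unfold pglue.
  destruct (Glb_Rbar_correct (fun c => chain Y p r c)) as [Hlb Hglb].
  destruct (Glb_Rbar (fun c => chain Y p r c)) eqn:E; simpl; auto.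
  - specialize (Hlb _ (chain_one Y p r)). simpl in Hlb. contradiction.
  - exfalso. assert (Rbar_le (Finite 0) m_infty).
    { apply Hglb. intros c Hc. simpl. apply (chain_nonneg _ _ _ Hc). }
    simpl in H. exact H.
Qed.

Lemma pglue_le p r c : chain Y p r c -> pglue Y p r <= c.
Proof.
  intro H. destruct (Glb_Rbar_correct (fun c => chain Y p r c)) as [Hlb _].
  rewrite pglue_finite in Hlb. apply (Hlb c H).
Qed.

Lemma pglue_nonneg p r : 0 <= pglue Y p r.
Proof.
  destruct (Glb_Rbar_correct (fun c => chain Y p r c)) as [_ Hglb].
  rewrite pglue_finite in Hglb.
  assert (Rbar_le (Finite 0) (Finite (pglue Y p r))).
  { apply Hglb. intros c Hc. simpl. apply (chain_nonneg _ _ _ Hc). }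
  exact H.
Qed.

Lemma pglue_approx p r eps : 0 < eps -> exists c, chain Y p r c /\ c < pglue Y p r + eps.
Proof.
  intro He. apply NNPP. intro N.
  destruct (Glb_Rbar_correct (fun c => chain Y p r c)) as [_ Hglb].
  rewrite pglue_finite in Hglb.
  assert (Rbar_le (Finite (pglue Y p r + eps)) (Finite (pglue Y p r))).
  { apply Hglb. intros c Hc. simpl. apply Rnot_lt_le. intro Hl. apply N. exists c; auto. }
  simpl in H. lra.
Qed.

Lemma pglue_le_dp p r : pglue Y p r <= dp p r.
Proof. apply pglue_le, chain_one. Qed.

Lemma pglue_psm : psm (pglue Y).
Proof.
  split; [|split].
  - intro a. pose proof (pglue_le_dp a a). rewrite dp_refl in H. pose proof (pglue_nonneg a a). lra.
  - assert (forall a b, pglue Y a b <= pglue Y b a).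
    { intros a b. apply Rnot_lt_le. intro Hl.
      destruct (pglue_approx b a (pglue Y a b - pglue Y b a)) as [c [Hc Hc']]. lra.
      apply chain_rev in Hc. apply pglue_le in Hc. lra. }
    intros a b. apply Rle_antisym; auto.
  - intros a b c. apply Rnot_lt_le. intro Hl.
    set (d := pglue Y a c - pglue Y a b - pglue Y b c) in *.
    destruct (pglue_approx a b (d/2)) as [c1 [H1 H1']]. unfold d; lra.
    destruct (pglue_approx b c (d/2)) as [c2 [H2 H2']]. unfold d; lra.
    pose proof (chain_app _ _ _ H1 _ _ _ (glue_refl b) H2) as H3.
    apply pglue_le in H3. unfold d in *. lra.
Qed.

Lemma pglue_sym p q : pglue Y p q = pglue Y q p.
Proof. apply pglue_psm. Qed.
Lemma pglue_tri p q r : pglue Y p r <= pglue Y p q + pglue Y q r.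
Proof. apply pglue_psm. Qed.

Lemma pglue_via p q q' r : glue Y q q' -> pglue Y p r <= dp p q + dp q' r.
Proof. intro H. apply pglue_le. eapply chain_cons. exact H. apply chain_one. Qed.

Lemma glue_pglue p q : glue Y p q -> pglue Y p q = 0.
Proof.
  intro H. pose proof (pglue_via p p q q H). rewrite !dp_refl in H0.
  pose proof (pglue_nonneg p q). lra.
Qed.

Definition glue0' (p q : M3 * Y) := glue0 Y p q \/ glue0 Y q p.

Ltac g0d H := destruct H as [[?E1 ?E2]|[[?E1 ?E2]|[?E1 ?E2]]]; subst.
Ltac g0s := first [ left; split; reflexivity | right; left; split; reflexivity | right; right; split; reflexivity ].
Ltac g0s' := first [ left; g0s | right; g0s ].

Lemma glue0_trans_aux x y z : glue0' x y -> glue0' y z -> x = z \/ glue0' x z.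
Proof.
  pose proof neqTL. pose proof neqLR. pose proof neqTR.
  unfold glue0'; intros [A|A] [B|B]; g0d A; g0d B;
  first [left; reflexivity | exfalso; congruence | (right; unfold glue0; g0s')].
Qed.

Lemma glue_char p q : glue Y p q -> p = q \/ glue0' p q.
Proof.
  induction 1.
  - right; left; auto.
  - left; auto.
  - destruct IHclos_refl_sym_trans as [->|[A|A]]; auto; right; unfold glue0'; tauto.
  - destruct IHclos_refl_sym_trans1 as [->|A]; auto.
    destruct IHclos_refl_sym_trans2 as [->|B]; auto.
    apply (glue0_trans_aux _ _ _ A B).
Qed.

Lemma glue0'_glue p q : glue0' p q -> glue Y p q.
Proof. intros [A|A]. apply rst_step; auto. apply rst_sym, rst_step; auto. Qed.

Lemma glue0'_sym p q : glue0' p q -> glue0' q p.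
Proof. unfold glue0'; tauto. Qed.

Lemma glue0'_match q p g : glue0' q p -> glue0' p g -> q = g.
Proof.
  intros A B. destruct (glue0_trans_aux _ _ _ A B) as [E|C]; auto.
  pose proof neqTL. pose proof neqLR. pose proof neqTR.
  exfalso. unfold glue0' in *.
  destruct A as [A|A]; destruct B as [B|B]; g0d A; g0d B; try congruence;
  destruct C as [C|C]; unfold glue0 in C; intuition congruence.
Qed.

Lemma glue_points_sep p g p' g' : glue0' p p' -> glue0' g g' -> dp p g < / 2 -> p = g.
Proof.
  pose proof md_TL. pose proof md_LR. pose proof md_TR.
  pose proof md_LT. pose proof md_RL. pose proof md_RT.
  unfold glue0'; intros [A|A] [B|B]; g0d A; g0d B; unfold dprod; simpl;
  rewrite ?md_refl; intros; first [reflexivity | lra].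
Qed.

Definition DP (p r : M3 * Y) (c : R) : Prop :=
  dp p r <= c \/ exists q q', glue0' q q' /\ dp p q + dp q' r <= c.

Lemma chain_DP p r c : chain Y p r c -> c < / 2 -> DP p r c.
Proof.
  induction 1 as [p r|p q p' r c Hg Hc IH]; intro Hlt.
  - left; lra.
  - pose proof (dp_nonneg p q). pose proof (chain_nonneg _ _ _ Hc).
    destruct (IH ltac:(lra)) as [D|[g [g' [Gg D]]]].
    + apply glue_char in Hg. destruct Hg as [->|Hg].
      * left. pose proof (dp_tri p p' r). lra.
      * right. exists q, p'. split; auto. lra.
    + apply glue_char in Hg. destruct Hg as [->|Hg].
      * right. exists g, g'. split; auto. pose proof (dp_tri p p' g). lra.
      * pose proof (dp_nonneg p' g). pose proof (dp_nonneg g' r).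
        assert (p' = g) by (apply (glue_points_sep p' g q g'); [apply glue0'_sym; auto|auto|lra]).
        subst g. assert (q = g') by (apply (glue0'_match q p' g'); auto). subst g'.
        left. pose proof (dp_tri p q r). lra.
Qed.

Lemma pglue_DP p r c : pglue Y p r < c -> c < / 2 -> DP p r c.
Proof.
  intros H1 H2. destruct (pglue_approx p r (c - pglue Y p r)) as [c' [Hc Hc']]. lra.
  destruct (chain_DP _ _ _ Hc ltac:(lra)) as [D|[q [q' [G D]]]].
  left; lra. right; exists q, q'; split; auto; lra.
Qed.

Lemma pglue_zero p r : pglue Y p r = 0 -> p = r \/ glue0' p r.
Proof.
  intro H0.
  (* finitely many options; use a min *)
  set (v q q' := dp p q + dp q' r).
  set (B1 := (mb, @tT Y)). set (B1' := (ma, @tL Y)).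
  set (B2 := (ma, @tR Y)). set (B2' := (mc, @tT Y)).
  set (B3 := (mc, @tL Y)). set (B3' := (mb, @tR Y)).
  set (Dg := Rmin (dp p r) (Rmin (Rmin (v B1 B1') (v B1' B1))
               (Rmin (Rmin (v B2 B2') (v B2' B2)) (Rmin (v B3 B3') (v B3' B3))))).
  assert (HD : forall c, 0 < c -> c < / 2 -> Dg <= c).
  { intros c Hc1 Hc2. assert (Hpc : pglue Y p r < c) by (rewrite H0; exact Hc1).
    destruct (pglue_DP p r c Hpc Hc2) as [D|[q [q' [G D]]]].
    - unfold Dg. apply Rmin_Rle. left; auto.
    - unfold Dg. apply Rmin_Rle. right.
      destruct G as [G|G]; g0d G; unfold v, B1, B1', B2, B2', B3, B3';
      solve_rmin. }
  assert (Dg <= 0).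
  { apply Rnot_lt_le. intro Hl. specialize (HD (Rmin (Dg/2) (/4))).
    assert (Rmin (Dg/2) (/4) <= Dg/2) by apply Rmin_l.
    assert (Rmin (Dg/2) (/4) <= /4) by apply Rmin_r.
    assert (0 < Rmin (Dg/2) (/4)) by (apply Rmin_glb_lt; lra).
    specialize (HD ltac:(lra) ltac:(lra)). lra. }
  pose proof (dp_nonneg p r).
  assert (forall q q', 0 <= v q q') by (intros; unfold v; pose proof (dp_nonneg p q); pose proof (dp_nonneg q' r); lra).
  assert (Hv : forall q q', v q q' <= 0 -> p = q /\ q' = r).
  { intros q q' Hq. unfold v in Hq. pose proof (dp_nonneg p q); pose proof (dp_nonneg q' r).
    split; apply dp_zero; lra. }
  unfold Dg in H.
  repeat match goal with
  | H : Rmin _ _ <= 0 |- _ => apply Rmin_Rle in H; destruct H as [H|H]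
  end.
  - left; apply dp_zero; lra.
  all: destruct (Hv _ _ H) as [E1 E2]; rewrite E1, <- E2; right;
       unfold glue0', glue0, B1, B1', B2, B2', B3, B3'; g0s'.
Qed.

Lemma pglue_zero_glue p r : pglue Y p r = 0 -> glue Y p r.
Proof.
  intro H. destruct (pglue_zero p r H) as [->|G]. apply glue_refl. apply glue0'_glue; auto.
Qed.

Lemma phi_bound (phi : M3 * Y -> R) :
  (forall p q, Rabs (phi p - phi q) <= dp p q) ->
  (forall p q, glue0 Y p q -> phi p = phi q) ->
  forall p r, Rabs (phi p - phi r) <= pglue Y p r.
Proof.
  intros Hl Hg.
  assert (Hgl : forall p q, glue Y p q -> phi p = phi q).
  { intros p q G. apply glue_char in G. destruct G as [->|[G|G]]; auto. symmetry; auto. }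
  assert (Hc : forall p r c, chain Y p r c -> Rabs (phi p - phi r) <= c).
  { induction 1. apply Hl. apply Hgl in H.
    pose proof (Hl p q). pose proof (Rabs_triang (phi p - phi q) (phi p' - phi r)).
    replace (phi p - phi q + (phi p' - phi r)) with (phi p - phi r) in H2 by (rewrite H; ring).
    lra. }
  intros p r. apply Rnot_lt_le. intro Hlt.
  destruct (pglue_approx p r (Rabs (phi p - phi r) - pglue Y p r)) as [c [H1 H2]]. lra.
  apply Hc in H1. lra.
Qed.

Lemma half_lip (y y' t : Y) : Rabs (/2 * mdist y t - /2 * mdist y' t) <= / 2 * mdist y y'.
Proof.
  pose proof (md_tri y y' t). pose proof (md_tri y' y t). rewrite (md_sym y' y) in H0.
  apply Rabs_le. lra.
Qed.

Definition phi1 (p : M3 * Y) : R :=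
  match fst p with ma => / 2 * mdist (snd p) tT | _ => / 2 + / 2 * mdist (snd p) tT end.
Definition phi2 (p : M3 * Y) : R :=
  match fst p with mb => / 2 * mdist (snd p) tL | _ => / 2 + / 2 * mdist (snd p) tL end.

Lemma phi_lip_gen (t : Y) (k : M3) (phi : M3 * Y -> R) :
  (forall p, phi p = match M3_eqb (fst p) k with true => / 2 * mdist (snd p) t | false => / 2 + / 2 * mdist (snd p) t end) ->
  forall p q, Rabs (phi p - phi q) <= dp p q.
Proof.
  intros E [a y] [b y']. rewrite !E. unfold dprod; simpl.
  pose proof (md_nonneg y t). pose proof (md_nonneg y' t). pose proof (md_le1 y t). pose proof (md_le1 y' t).
  pose proof (half_lip y y' t).
  destruct (M3_eqb a b) eqn:Eab.
  - apply M3_eqb_true in Eab. subst b. destruct (M3_eqb a k).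
    + exact H3.
    + replace (/ 2 + / 2 * mdist y t - (/ 2 + / 2 * mdist y' t)) with (/ 2 * mdist y t - / 2 * mdist y' t) by ring. exact H3.
  - destruct (M3_eqb a k); destruct (M3_eqb b k); apply Rabs_le; lra.
Qed.

Lemma phi1_bound p r : Rabs (phi1 p - phi1 r) <= pglue Y p r.
Proof.
  apply phi_bound.
  - apply (phi_lip_gen tT ma). intros [[] y]; reflexivity.
  - intros p0 q0 G. pose proof md_TL. pose proof md_LR. pose proof md_TR.
    pose proof md_LT. pose proof md_RL. pose proof md_RT.
    g0d G; unfold phi1; simpl; rewrite ?md_refl; lra.
Qed.
Lemma phi2_bound p r : Rabs (phi2 p - phi2 r) <= pglue Y p r.
Proof.
  apply phi_bound.
  - apply (phi_lip_gen tL mb). intros [[] y]; reflexivity.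
  - intros p0 q0 G. pose proof md_TL. pose proof md_LR. pose proof md_TR.
    pose proof md_LT. pose proof md_RL. pose proof md_RT.
    g0d G; unfold phi2; simpl; rewrite ?md_refl; lra.
Qed.

Lemma F_met3 : is_met3 (F Y).
Proof.
  pose proof (qdist_psm _ pglue_psm) as [Q0 [Qs Qt]].
  assert (Hcl : forall p q, @mdist (F Y) (cls (pglue Y) p) (cls (pglue Y) q) = pglue Y p q).
  { intros; apply (qdist_cls _ pglue_psm). }
  assert (H1 : forall (p q : M3 * Y), pglue Y p q <= 1 -> 1 <= pglue Y p q -> pglue Y p q = 1) by (intros; lra).
  split; [|split; [|split; [|split; [|split; [|split]]]]].
  - intros x y. simpl. split. apply (qdist_nonneg _ pglue_psm).
    rewrite (qdist_rep _ pglue_psm). pose proof (pglue_le_dp (rep x) (rep y)). pose proof (dp_le1 (rep x) (rep y)). lra.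
  - intros x y. simpl. split. apply (qdist_def _ pglue_psm). intros ->; apply qdist_refl.
  - intros; apply Qs.
  - intros; apply Qt.
  - simpl. rewrite (qdist_cls _ pglue_psm). apply H1. eapply Rle_trans. apply pglue_le_dp. apply dp_le1.
    pose proof (phi1_bound (ma, tT) (mb, tL)). unfold phi1 in H; simpl in H.
    rewrite md_refl, md_LT in H. rewrite Rabs_left1 in H; lra.
  - simpl. rewrite (qdist_cls _ pglue_psm). apply H1. eapply Rle_trans. apply pglue_le_dp. apply dp_le1.
    pose proof (phi2_bound (mb, tL) (mc, tR)). unfold phi2 in H; simpl in H.
    rewrite md_refl, md_RL in H. rewrite Rabs_left1 in H; lra.
  - simpl. rewrite (qdist_cls _ pglue_psm). apply H1. eapply Rle_trans. apply pglue_le_dp. apply dp_le1.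
    pose proof (phi1_bound (ma, tT) (mc, tR)). unfold phi1 in H; simpl in H.
    rewrite md_refl, md_RT in H. rewrite Rabs_left1 in H; lra.
Qed.

Lemma F_dist_cls p q : @mdist (F Y) (cls (pglue Y) p) (cls (pglue Y) q) = pglue Y p q.
Proof. apply (qdist_cls _ pglue_psm). Qed.
Lemma F_dist_rep (u v : F Y) : mdist u v = pglue Y (rep u) (rep v).
Proof. apply (qdist_rep _ pglue_psm). Qed.
Lemma F_cls_rep (u : F Y) : cls (pglue Y) (rep u) = u.
Proof. apply cls_rep. Qed.
Lemma F_rep_cls p : pglue Y (rep (cls (pglue Y) p)) p = 0.
Proof. apply (rep_cls _ pglue_psm). Qed.
Lemma F_cls_eq p q : pglue Y p q = 0 -> cls (pglue Y) p = cls (pglue Y) q.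
Proof. apply (cls_eq _ pglue_psm). Qed.

Lemma tensor_half a (y y' : Y) : mdist (tensor a y) (tensor a y') <= / 2 * mdist y y'.
Proof. unfold tensor. rewrite F_dist_cls. rewrite <- (dp_same a y y'). apply pglue_le_dp. Qed.

End FMetric.

Lemma Fiter_met3 n (Y : Met3) : is_met3 Y -> is_met3 (Fiter n Y).
Proof.
  revert Y; induction n; intros Y HY; simpl; auto. apply IHn, F_met3, HY.
Qed.

Definition nonexp {Y Z : Met3} (g : Y -> Z) := forall y y', mdist (g y) (g y') <= mdist y y'.
Definition isom {Y Z : Met3} (g : Y -> Z) := forall y y', mdist (g y) (g y') = mdist y y'.

Lemma dp_lt1 (Y : Met3) p q c : dprod Y p q <= c -> c < 1 -> fst p = fst q /\ / 2 * mdist (snd p) (snd q) <= c.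
Proof.
  unfold dprod. destruct (M3_eqb _ _) eqn:E. intros. split; auto. apply M3_eqb_true; auto. lra.
Qed.

Section Maps.
Variables Y Z : Met3.
Hypothesis HY : is_met3 Y.
Hypothesis HZ : is_met3 Z.
Variable g : Y -> Z.
Hypothesis Hg : preserves g.

Definition mapp (p : M3 * Y) : M3 * Z := (fst p, g (snd p)).

Lemma glue0_map p q : glue0 Y p q -> glue0 Z (mapp p) (mapp q).
Proof.
  destruct Hg as [HT [HL HR]].
  unfold glue0, mapp. intros [[-> ->]|[[-> ->]|[-> ->]]]; simpl; rewrite ?HT, ?HL, ?HR; tauto.
Qed.

Lemma glue_map p q : glue Y p q -> glue Z (mapp p) (mapp q).
Proof.
  induction 1.
  - apply rst_step, glue0_map; auto.
  - apply rst_refl.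
  - apply rst_sym; auto.
  - eapply rst_trans; eauto.
Qed.

Lemma Fmap_cls p : Fmap g (cls (pglue Y) p) = cls (pglue Z) (mapp p).
Proof.
  unfold Fmap, tensor. change (cls (pglue Z) (mapp (rep (cls (pglue Y) p))) = cls (pglue Z) (mapp p)).
  apply (F_cls_eq Z HZ). apply (glue_pglue Z HZ). apply glue_map.
  apply (pglue_zero_glue Y HY). apply F_rep_cls; auto.
Qed.

Lemma Fmap_tensor a y : Fmap g (tensor a y) = tensor a (g y).
Proof. apply Fmap_cls. Qed.

Lemma Fmap_preserves : preserves (Fmap g).
Proof.
  destruct Hg as [HT [HL HR]]. split; [|split]; simpl;
  change (cls (pglue Y) ?p) with (tensor (fst p) (snd p)); rewrite Fmap_tensor; simpl;
  rewrite ?HT, ?HL, ?HR; reflexivity.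
Qed.

Lemma Fmap_dist u v : mdist (Fmap g u) (Fmap g v) = pglue Z (mapp (rep u)) (mapp (rep v)).
Proof. unfold Fmap, tensor. apply (F_dist_cls Z HZ). Qed.

Lemma Fmap_nonexp : nonexp g -> nonexp (Fmap g).
Proof.
  intros Hn u v. rewrite Fmap_dist, (F_dist_rep Y HY).
  assert (Hc : forall p r c, chain Y p r c -> pglue Z (mapp p) (mapp r) <= c).
  { induction 1.
    - eapply Rle_trans. apply pglue_le_dp; auto. unfold dprod, mapp; simpl.
      destruct (M3_eqb _ _). specialize (Hn (snd p) (snd r)). lra. lra.
    - pose proof (pglue_tri Z HZ (mapp p) (mapp q) (mapp r)) as T1.
      pose proof (pglue_tri Z HZ (mapp q) (mapp p') (mapp r)) as T2.
      rewrite (glue_pglue Z HZ _ _ (glue_map _ _ H)) in T2.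
      assert (pglue Z (mapp p) (mapp q) <= dprod Y p q).
      { eapply Rle_trans. apply pglue_le_dp; auto. unfold dprod, mapp; simpl.
        destruct (M3_eqb _ _). specialize (Hn (snd p) (snd q)). lra. lra. }
      lra. }
  apply Rnot_lt_le. intro Hl.
  destruct (pglue_approx Y HY (rep u) (rep v) (pglue Z (mapp (rep u)) (mapp (rep v)) - pglue Y (rep u) (rep v))) as [c [H1 H2]]. lra.
  apply Hc in H1. lra.
Qed.

Lemma glue_point_pre q q' : glue0 Z q q' ->
  exists qY qY', q = mapp qY /\ q' = mapp qY' /\ glue0 Y qY qY'.
Proof.
  destruct Hg as [HT [HL HR]].
  intros [[-> ->]|[[-> ->]|[-> ->]]].
  - exists (mb, tT), (ma, tL). unfold mapp; simpl; rewrite HT, HL. unfold glue0; tauto.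
  - exists (ma, tR), (mc, tT). unfold mapp; simpl; rewrite HT, HR. unfold glue0; tauto.
  - exists (mc, tL), (mb, tR). unfold mapp; simpl; rewrite HL, HR. unfold glue0; tauto.
Qed.

Lemma Fmap_isom : isom g -> isom (Fmap g).
Proof.
  intros Hi u v. apply Rle_antisym.
  { apply Fmap_nonexp. intros y y'; rewrite Hi; lra. }
  rewrite Fmap_dist, (F_dist_rep Y HY).
  assert (Hdp : forall p q, dprod Z (mapp p) (mapp q) = dprod Y p q).
  { intros; unfold dprod, mapp; simpl; rewrite Hi; reflexivity. }
  assert (Hc : forall p r c, chain Z p r c -> forall rY, r = mapp rY -> forall y0,
            pglue Y y0 rY <= dprod Z (mapp y0) p + c).
  { induction 1; intros rY Er y0.
    - subst r. eapply Rle_trans. apply pglue_le_dp; auto. rewrite <- Hdp.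
      pose proof (dp_tri Z HZ (mapp y0) p (mapp rY)). pose proof (dp_nonneg Z HZ p (mapp rY)). lra.
    - pose proof (dp_tri Z HZ (mapp y0) p q).
      apply (glue_char Z HZ) in H. destruct H as [<-|[G|G]].
      + specialize (IHchain rY Er y0). lra.
      + destruct (glue_point_pre _ _ G) as [qY [pY [-> [-> G']]]].
        specialize (IHchain rY Er pY). rewrite (dp_refl Z HZ) in IHchain.
        pose proof (pglue_tri Y HY y0 qY rY) as T1. pose proof (pglue_tri Y HY qY pY rY) as T2.
        rewrite (glue_pglue Y HY qY pY (rst_step _ _ _ _ G')) in T2.
        pose proof (pglue_le_dp Y HY y0 qY) as T3. rewrite <- Hdp in T3. lra.
      + destruct (glue_point_pre _ _ G) as [pY [qY [-> [-> G']]]].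
        specialize (IHchain rY Er pY). rewrite (dp_refl Z HZ) in IHchain.
        pose proof (pglue_tri Y HY y0 qY rY) as T1. pose proof (pglue_tri Y HY qY pY rY) as T2.
        rewrite (glue_pglue Y HY qY pY (rst_sym _ _ _ _ (rst_step _ _ _ _ G'))) in T2.
        pose proof (pglue_le_dp Y HY y0 qY) as T3. rewrite <- Hdp in T3. lra. }
  apply Rnot_lt_le. intro Hl.
  destruct (pglue_approx Z HZ (mapp (rep u)) (mapp (rep v)) (pglue Y (rep u) (rep v) - pglue Z (mapp (rep u)) (mapp (rep v)))) as [c [H1 H2]]. lra.
  specialize (Hc _ _ _ H1 (rep v) eq_refl (rep u)). rewrite (dp_refl Z HZ) in Hc. lra.
Qed.

Lemma glue0'_snd q q' : glue0' Y q q' -> snd q' = tT \/ snd q' = tL \/ snd q' = tR.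
Proof. unfold glue0', glue0; intros [[[-> ->]|[[-> ->]|[-> ->]]]|[[-> ->]|[[-> ->]|[-> ->]]]]; simpl; tauto. Qed.

Lemma Fmap_cont : continuous g -> continuous (Fmap g).
Proof.
  intros Hc u eps Heps.
  destruct (Hc (snd (rep u)) eps Heps) as [dp0 [Hdp0 Hp0]].
  destruct (Hc tT eps Heps) as [dT [HdT HT]].
  destruct (Hc tL eps Heps) as [dL [HdL HL]].
  destruct (Hc tR eps Heps) as [dR [HdR HR]].
  set (d := Rmin (/4) (Rmin (dp0/4) (Rmin (dT/4) (Rmin (dL/4) (dR/4))))).
  assert (d <= /4 /\ d <= dp0/4 /\ d <= dT/4 /\ d <= dL/4 /\ d <= dR/4 /\ 0 < d) as (D1 & D2 & D3 & D4 & D5 & D6).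
  { unfold d. repeat split; repeat (apply Rmin_Rle; first [left; lra | right]); try lra.
    repeat apply Rmin_glb_lt; lra. }
  exists d. split; auto. intros v Hv.
  rewrite Fmap_dist. rewrite (F_dist_rep Y HY) in Hv.
  destruct (pglue_DP Y HY (rep u) (rep v) d Hv ltac:(lra)) as [D|[q [q' [G D]]]].
  - destruct (dp_lt1 Y _ _ _ D ltac:(lra)) as [E D'].
    eapply Rle_lt_trans. apply pglue_le_dp; auto. unfold dprod, mapp; simpl. rewrite E, M3_eqb_refl.
    assert (mdist (snd (rep u)) (snd (rep v)) < dp0) by lra.
    specialize (Hp0 _ H). lra.
  - pose proof (dp_nonneg Y HY (rep u) q). pose proof (dp_nonneg Y HY q' (rep v)).
    destruct (dp_lt1 Y _ _ (dprod Y (rep u) q) (Rle_refl _) ltac:(lra)) as [E1 D1'].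
    destruct (dp_lt1 Y _ _ (dprod Y q' (rep v)) (Rle_refl _) ltac:(lra)) as [E2 D2'].
    eapply Rle_lt_trans. apply (pglue_via Z HZ _ (mapp q) (mapp q')). apply glue_map, glue0'_glue; auto.
    unfold dprod, mapp; simpl. rewrite E1, E2, !M3_eqb_refl.
    assert (mdist (snd (rep u)) (snd q) < dp0) by lra.
    specialize (Hp0 _ H1).
    assert (mdist (g (snd q')) (g (snd (rep v)))  < eps).
    { destruct (glue0'_snd q q' G) as [Eq|[Eq|Eq]]; rewrite Eq in *.
      apply HT; lra. apply HL; lra. apply HR; lra. }
    lra.
Qed.

End Maps.

Lemma iter_tens n : forall (Y Z : Met3) (g : Y -> Z), is_met3 Y -> is_met3 Z -> preserves g ->
  forall m y, Fmap_iter n g (tens m n y) = tens m n (g y).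
Proof.
  induction n; intros Y Z g HY HZ Hg m y; simpl; auto.
  rewrite (IHn (F Y) (F Z) (Fmap g)); auto.
  rewrite Fmap_tensor; auto. apply F_met3; auto. apply F_met3; auto. apply Fmap_preserves; auto.
Qed.

Lemma iter_preserves n : forall (Y Z : Met3) (g : Y -> Z), is_met3 Y -> is_met3 Z -> preserves g ->
  preserves (Fmap_iter n g).
Proof.
  induction n; intros Y Z g HY HZ Hg; simpl; auto.
  apply IHn; auto using F_met3, Fmap_preserves.
Qed.

Lemma iter_nonexp n : forall (Y Z : Met3) (g : Y -> Z), is_met3 Y -> is_met3 Z -> preserves g ->
  nonexp g -> nonexp (Fmap_iter n g).
Proof.
  induction n; intros Y Z g HY HZ Hg Hn; simpl; auto.
  apply IHn; auto using F_met3, Fmap_preserves, Fmap_nonexp.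
Qed.

Lemma iter_isom n : forall (Y Z : Met3) (g : Y -> Z), is_met3 Y -> is_met3 Z -> preserves g ->
  isom g -> isom (Fmap_iter n g).
Proof.
  induction n; intros Y Z g HY HZ Hg Hn; simpl; auto.
  apply IHn; auto using F_met3, Fmap_preserves, Fmap_isom.
Qed.

Lemma iter_cont n : forall (Y Z : Met3) (g : Y -> Z), is_met3 Y -> is_met3 Z -> preserves g ->
  continuous g -> continuous (Fmap_iter n g).
Proof.
  induction n; intros Y Z g HY HZ Hg Hn; simpl; auto.
  apply IHn; auto using F_met3, Fmap_preserves, Fmap_cont.
Qed.

Lemma tens_ext n : forall (Y : Met3) (m m' : nat -> M3) (y : Y),
  (forall i, (i < n)%nat -> m i = m' i) -> tens m n y = tens m' n y.
Proof.
  induction n; intros Y m m' y H; simpl; auto.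
  rewrite (H n) by lia. apply IHn. intros; apply H; lia.
Qed.

Lemma tens_lip n : forall (Y : Met3), is_met3 Y -> forall m (y y' : Y),
  mdist (tens m n y) (tens m n y') <= (/ 2) ^ n * mdist y y'.
Proof.
  induction n; intros Y HY m y y'; simpl.
  - lra.
  - eapply Rle_trans. apply IHn. apply F_met3; auto.
    pose proof (tensor_half Y HY (m n) y y').
    pose proof (pow_le (/2) n ltac:(lra)).
    apply Rmult_le_compat_l with (r := (/2)^n) in H; auto. lra.
Qed.

Lemma tens_agree n : forall (Y : Met3), is_met3 Y -> forall k m m' (y y' : Y),
  (forall i, (i < k)%nat -> m i = m' i) -> (k <= n)%nat ->
  mdist (tens m n y) (tens m' n y') <= (/ 2) ^ k.
Proof.
  induction n; intros Y HY k m m' y y' Hm Hk.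
  - simpl. replace k with 0%nat by lia. simpl. apply (md_le1 Y HY).
  - destruct (Nat.eq_dec k (Datatypes.S n)) as [->|Hne].
    + simpl. rewrite (tens_ext n (F Y) m' m) by (intros; symmetry; apply Hm; lia).
      rewrite (Hm n) by lia.
      eapply Rle_trans. apply tens_lip. apply F_met3; auto.
      pose proof (tensor_half Y HY (m' n) y y'). pose proof (md_le1 Y HY y y').
      pose proof (pow_le (/2) n ltac:(lra)).
      assert (mdist (tensor (m' n) y) (tensor (m' n) y') <= /2) by lra.
      apply Rmult_le_compat_l with (r := (/2)^n) in H2; auto. lra.
    + simpl. apply IHn; auto. apply F_met3; auto. lia.
Qed.

Lemma tens_surj n : forall (Y : Met3) (u : Fiter n Y), exists m y, u = tens m n y.
Proof.
  induction n; intros Y u.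
  - exists (fun _ => ma), u. reflexivity.
  - destruct (IHn (F Y) u) as [m [w ->]].
    exists (fun i => if Nat.eqb i n then fst (rep w) else m i), (snd (rep w)).
    simpl. rewrite Nat.eqb_refl.
    rewrite (tens_ext n (F Y) (fun i => if Nat.eqb i n then fst (rep w) else m i) m).
    + f_equal. unfold tensor. rewrite <- (cls_rep (pglue Y) w) at 1. destruct (rep w); reflexivity.
    + intros i Hi. destruct (Nat.eqb_spec i n). lia. reflexivity.
Qed.

Definition sW (v w : R * R * R) : R :=
  Rmax (Rabs (fst (fst v) - fst (fst w))) (Rmax (Rabs (snd (fst v) - snd (fst w))) (Rabs (snd v - snd w))).
Definition dW (v w : R * R * R) : R := Rmin 1 (sW v w).

Definition W : Met3 := mkMet3 (R * R * R) dW (0, 1, 1) (1, 0, 1) (1, 1, 0).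

Lemma abs0 a : Rabs a = 0 -> a = 0.
Proof. intro H. destruct (Req_dec a 0); auto. exfalso; apply (Rabs_no_R0 a); auto. Qed.

Lemma sW_nonneg v w : 0 <= sW v w.
Proof. unfold sW. eapply Rle_trans. apply Rabs_pos. apply Rmax_l. Qed.

Lemma sW_sym v w : sW v w = sW w v.
Proof. unfold sW. rewrite (Rabs_minus_sym (fst (fst v))), (Rabs_minus_sym (snd (fst v))), (Rabs_minus_sym (snd v)). reflexivity. Qed.

Lemma sW_tri u v w : sW u w <= sW u v + sW v w.
Proof.
  unfold sW.
  destruct u as [[u1 u2] u3], v as [[v1 v2] v3], w as [[w1 w2] w3]; simpl.
  pose proof (Rabs_triang (u1 - v1) (v1 - w1)). replace (u1 - v1 + (v1 - w1)) with (u1 - w1) in H by ring.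
  pose proof (Rabs_triang (u2 - v2) (v2 - w2)). replace (u2 - v2 + (v2 - w2)) with (u2 - w2) in H0 by ring.
  pose proof (Rabs_triang (u3 - v3) (v3 - w3)). replace (u3 - v3 + (v3 - w3)) with (u3 - w3) in H1 by ring.
  pose proof (Rmax_l (Rabs (u1 - v1)) (Rmax (Rabs (u2 - v2)) (Rabs (u3 - v3)))).
  pose proof (Rmax_r (Rabs (u1 - v1)) (Rmax (Rabs (u2 - v2)) (Rabs (u3 - v3)))).
  pose proof (Rmax_l (Rabs (u2 - v2)) (Rabs (u3 - v3))).
  pose proof (Rmax_r (Rabs (u2 - v2)) (Rabs (u3 - v3))).
  pose proof (Rmax_l (Rabs (v1 - w1)) (Rmax (Rabs (v2 - w2)) (Rabs (v3 - w3)))).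
  pose proof (Rmax_r (Rabs (v1 - w1)) (Rmax (Rabs (v2 - w2)) (Rabs (v3 - w3)))).
  pose proof (Rmax_l (Rabs (v2 - w2)) (Rabs (v3 - w3))).
  pose proof (Rmax_r (Rabs (v2 - w2)) (Rabs (v3 - w3))).
  apply Rmax_lub. lra. apply Rmax_lub; lra.
Qed.

Lemma ab01 : Rabs (0 - 1) = 1. Proof. rewrite Rabs_left; lra. Qed.
Lemma ab10 : Rabs (1 - 0) = 1. Proof. rewrite Rabs_pos_eq; lra. Qed.
Lemma ab11 : Rabs (1 - 1) = 0. Proof. rewrite Rminus_diag; apply Rabs_R0. Qed.
Lemma ab00 : Rabs (0 - 0) = 0. Proof. rewrite Rminus_diag; apply Rabs_R0. Qed.
Ltac num_solve := unfold dW, sW; simpl; rewrite ?ab01, ?ab10, ?ab11, ?ab00; unfold Rmin, Rmax;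
  repeat (destruct (Rle_dec _ _)); lra.

Lemma W_met3 : is_met3 W.
Proof.
  assert (Hm : forall a, 0 <= a -> 0 <= Rmin 1 a <= 1).
  { intros a Ha. unfold Rmin. destruct (Rle_dec 1 a); lra. }
  split; [|split; [|split; [|split; [|split; [|split]]]]]; simpl.
  - intros; unfold dW. apply Hm, sW_nonneg.
  - intros v w. unfold dW. split.
    + intro H. assert (sW v w = 0).
      { pose proof (sW_nonneg v w). unfold Rmin in H. destruct (Rle_dec 1 (sW v w)); lra. }
      unfold sW in H0.
      destruct v as [[v1 v2] v3], w as [[w1 w2] w3]; simpl in *.
      pose proof (Rabs_pos (v1 - w1)). pose proof (Rabs_pos (v2 - w2)). pose proof (Rabs_pos (v3 - w3)).
      pose proof (Rmax_l (Rabs (v1 - w1)) (Rmax (Rabs (v2 - w2)) (Rabs (v3 - w3)))).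
      pose proof (Rmax_r (Rabs (v1 - w1)) (Rmax (Rabs (v2 - w2)) (Rabs (v3 - w3)))).
      pose proof (Rmax_l (Rabs (v2 - w2)) (Rabs (v3 - w3))).
      pose proof (Rmax_r (Rabs (v2 - w2)) (Rabs (v3 - w3))).
      assert (Rabs (v1 - w1) = 0) by lra. assert (Rabs (v2 - w2) = 0) by lra. assert (Rabs (v3 - w3) = 0) by lra.
      apply abs0 in H8, H9, H10. f_equal; [f_equal|]; lra.
    + intros ->. unfold sW. rewrite !Rminus_diag, Rabs_R0. rewrite (Rmax_left 0 0) by lra. rewrite (Rmax_left 0 0) by lra. unfold Rmin. destruct (Rle_dec 1 0); lra.
  - intros x y. change (dW x y = dW y x). unfold dW; rewrite sW_sym; auto.
  - intros u v w. change (dW u w <= dW u v + dW v w). unfold dW. pose proof (sW_tri u v w). pose proof (sW_nonneg u v). pose proof (sW_nonneg v w).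
    unfold Rmin. destruct (Rle_dec 1 (sW u w)), (Rle_dec 1 (sW u v)), (Rle_dec 1 (sW v w)); lra.
  all: num_solve.
Qed.

Section HX.
Variable X : Met3.
Hypothesis HX : is_met3 X.
Definition hX (x : X) : W := (mdist x tT, mdist x tL, mdist x tR).

Lemma hX_preserves : preserves hX.
Proof.
  unfold preserves, hX; simpl.
  rewrite !(md_refl X HX), (md_TL X HX), (md_TR X HX), (md_LT X HX), (md_LR X HX), (md_RT X HX), (md_RL X HX).
  auto.
Qed.

Lemma hX_nonexp : nonexp hX.
Proof.
  intros x y. simpl. unfold dW, sW, hX; simpl.
  assert (Hc : forall t : X, Rabs (mdist x t - mdist y t) <= mdist x y).
  { intro t. pose proof (md_tri X HX x y t). pose proof (md_tri X HX y x t). rewrite (md_sym X HX y x) in H0.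
    apply Rabs_le; lra. }
  eapply Rle_trans. apply Rmin_r. apply Rmax_lub. apply Hc. apply Rmax_lub; apply Hc.
Qed.
End HX.

Lemma I_met3 : is_met3 I.
Proof.
  split; [|split; [|split; [|split; [|split; [|split]]]]]; simpl.
  - intros [] []; simpl; lra.
  - intros [] []; simpl; split; intro; try lra; try congruence.
  - intros [] []; reflexivity.
  - intros [] [] []; simpl; lra.
  - reflexivity. - reflexivity. - reflexivity.
Qed.

Lemma hI_isom : isom (hX I).
Proof.
  intros [] []; simpl; unfold hX; simpl; num_solve.
Qed.

Definition sym3 (y : P3) : M3 := match y with T => ma | L => mb | Rp => mc end.

Lemma bang_tensor (y : I) : bang y = tensor (sym3 y) y.
Proof. destruct y; reflexivity. Qed.

Lemma bang_preserves : preserves bang.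
Proof. split; [|split]; reflexivity. Qed.

Lemma FI_met3 : is_met3 (F I).
Proof. apply F_met3, I_met3. Qed.

Lemma bang_isom : isom bang.
Proof.
  pose proof FI_met3 as H.
  intros [] []; cbv beta iota delta [bang];
  change (@tensor I ma T) with (@tT (F I));
  change (@tensor I mb L) with (@tL (F I));
  change (@tensor I mc Rp) with (@tR (F I));
  rewrite ?(md_refl _ H), ?(md_TL _ H), ?(md_LR _ H), ?(md_TR _ H), ?(md_LT _ H), ?(md_RL _ H), ?(md_RT _ H);
  reflexivity.
Qed.

Definition ext (m : nat -> M3) (n : nat) (y : P3) : nat -> M3 :=
  fun i => if Nat.ltb i n then m i else sym3 y.

Lemma ext_lt m n y i : (i < n)%nat -> ext m n y i = m i.
Proof. intro H. unfold ext. destruct (Nat.ltb_spec i n); auto; lia. Qed.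
Lemma ext_ge m n y i : (n <= i)%nat -> ext m n y i = sym3 y.
Proof. intro H. unfold ext. destruct (Nat.ltb_spec i n); auto; lia. Qed.

Lemma lift_tens j : forall n m (y : I), lift j n (tens m n y) = tens (ext m n y) (j + n) y.
Proof.
  induction j; intros n m y.
  - simpl. apply tens_ext. intros; rewrite ext_lt; auto.
  - simpl. rewrite IHj. rewrite (iter_tens (j + n) I (F I) bang I_met3 FI_met3 bang_preserves).
    rewrite bang_tensor. rewrite ext_ge by lia. reflexivity.
Qed.

Lemma tens_cast N N' (e : N = N') E (y : I) :
  eq_rect N (fun N => car (Fiter N I)) (tens E N y) N' e = tens E N' y.
Proof. destruct e; reflexivity. Qed.

Lemma pG_tens_base n k m m' (y y' : I) :
  pG (Gel n (tens m n y)) (Gel k (tens m' k y')) =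
  mdist (tens (ext m n y) (k + n) y) (tens (ext m' k y') (k + n) y').
Proof.
  unfold pG, Gel. rewrite !lift_tens. rewrite tens_cast. reflexivity.
Qed.

Lemma lvl_step N n k m m' (y y' : I) : (n <= N)%nat -> (k <= N)%nat ->
  mdist (tens (ext m n y) N y) (tens (ext m' k y') N y') =
  mdist (tens (ext m n y) (Datatypes.S N) y) (tens (ext m' k y') (Datatypes.S N) y').
Proof.
  intros Hn Hk. simpl. rewrite (ext_ge m n y N Hn), (ext_ge m' k y' N Hk).
  rewrite <- !bang_tensor.
  rewrite <- !(iter_tens N I (F I) bang I_met3 FI_met3 bang_preserves).
  symmetry. apply (iter_isom N I (F I) bang I_met3 FI_met3 bang_preserves bang_isom).
Qed.

Lemma lvl_eq d : forall N n k m m' (y y' : I), (n <= N)%nat -> (k <= N)%nat ->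
  mdist (tens (ext m n y) N y) (tens (ext m' k y') N y') =
  mdist (tens (ext m n y) (d + N) y) (tens (ext m' k y') (d + N) y').
Proof.
  induction d; intros; simpl; auto.
  rewrite IHd; auto. apply lvl_step; lia.
Qed.

Lemma pG_tens n k m m' (y y' : I) N : (n <= N)%nat -> (k <= N)%nat ->
  pG (Gel n (tens m n y)) (Gel k (tens m' k y')) =
  mdist (tens (ext m n y) N y) (tens (ext m' k y') N y').
Proof.
  intros Hn Hk. rewrite pG_tens_base.
  rewrite (lvl_eq N (k + n)) by lia. rewrite (lvl_eq (k + n) N) by lia.
  replace (N + (k + n))%nat with (k + n + N)%nat by lia. reflexivity.
Qed.

Lemma FIn_met3 n : is_met3 (Fiter n I).
Proof. apply Fiter_met3, I_met3. Qed.

Lemma pG_psm : psm pG.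
Proof.
  assert (Hd : forall a : Gpre, exists n m (y : I), a = Gel n (tens m n y)).
  { intros [n u]. destruct (tens_surj n I u) as [m [y ->]]. exists n, m, y. reflexivity. }
  split; [|split].
  - intro a. destruct (Hd a) as [n [m [y ->]]]. rewrite (pG_tens n n m m y y n) by lia.
    apply (md_refl _ (FIn_met3 n)).
  - intros a b. destruct (Hd a) as [n [m [y ->]]]. destruct (Hd b) as [k [m' [y' ->]]].
    rewrite (pG_tens n k m m' y y' (n + k)) by lia. rewrite (pG_tens k n m' m y' y (n + k)) by lia.
    apply (md_sym _ (FIn_met3 _)).
  - intros a b c. destruct (Hd a) as [n [m [y ->]]]. destruct (Hd b) as [k [m' [y' ->]]].
    destruct (Hd c) as [l [m'' [y'' ->]]].
    rewrite (pG_tens n l m m'' y y'' (n + k + l)) by lia.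
    rewrite (pG_tens n k m m' y y' (n + k + l)) by lia.
    rewrite (pG_tens k l m' m'' y' y'' (n + k + l)) by lia.
    apply (md_tri _ (FIn_met3 _)).
Qed.

Lemma G_dist_cls a b : @mdist G (cls pG a) (cls pG b) = pG a b.
Proof. apply (qdist_cls _ pG_psm). Qed.

Lemma G_psm : psm (@mdist G).
Proof. apply (qdist_psm _ pG_psm). Qed.

Lemma Gd_sym (a b : G) : mdist a b = mdist b a.
Proof. apply G_psm. Qed.
Lemma Gd_tri (a b c : G) : mdist a c <= mdist a b + mdist b c.
Proof. apply G_psm. Qed.
Lemma Gd_refl (a : G) : mdist a a = 0.
Proof. apply G_psm. Qed.

Lemma cauchy_lim (s t : CauchyG) :
  is_lim_seq (fun n => mdist (proj1_sig s n) (proj1_sig t n)) (dCS s t).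
Proof.
  destruct s as [s Hs], t as [t Ht]. unfold dCS. cbn [proj1_sig].
  set (u := fun n => mdist (s n) (t n)).
  assert (Hf : ex_finite_lim_seq u).
  { apply ex_lim_seq_cauchy_corr. intro eps.
    destruct (Hs (eps / 2)) as [N1 H1]. pose proof (cond_pos eps); lra.
    destruct (Ht (eps / 2)) as [N2 H2]. pose proof (cond_pos eps); lra.
    exists (Nat.max N1 N2). intros n k Hn Hk. unfold u.
    specialize (H1 n k ltac:(lia) ltac:(lia)). specialize (H2 n k ltac:(lia) ltac:(lia)).
    pose proof (Gd_tri (s n) (s k) (t n)). pose proof (Gd_tri (s k) (t k) (t n)).
    pose proof (Gd_tri (s k) (s n) (t k)). pose proof (Gd_tri (s n) (t n) (t k)).
    rewrite (Gd_sym (s k) (s n)) in *. rewrite (Gd_sym (t k) (t n)) in *.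
    apply Rabs_def1; lra. }
  destruct Hf as [l Hl]. rewrite (is_lim_seq_unique _ _ Hl). exact Hl.
Qed.

Lemma dCS_psm : psm dCS.
Proof.
  split; [|split].
  - intros [s Hs]. unfold dCS; simpl.
    rewrite (Lim_seq_ext _ (fun _ => 0)). rewrite Lim_seq_const. reflexivity.
    intro n. apply Gd_refl.
  - intros [s Hs] [t Ht]. unfold dCS; simpl. f_equal. apply Lim_seq_ext. intro; apply Gd_sym.
  - intros a b c. pose proof (cauchy_lim a c) as H1. pose proof (cauchy_lim a b) as H2.
    pose proof (cauchy_lim b c) as H3.
    pose proof (is_lim_seq_plus' _ _ _ _ H2 H3) as H4.
    pose proof (is_lim_seq_le _ _ _ _ (fun n => Gd_tri _ (proj1_sig b n) _) H1 H4). simpl in H. exact H.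
Qed.

Lemma S_dist_j (a b : G) : @mdist S (jS a) (jS b) = mdist a b.
Proof.
  unfold jS. simpl. rewrite (qdist_cls _ dCS_psm). unfold dCS; simpl.
  rewrite Lim_seq_const. reflexivity.
Qed.

Lemma S_psm : psm (@mdist S).
Proof. apply (qdist_psm _ dCS_psm). Qed.

Lemma Sd_def (P Q : S) : mdist P Q = 0 -> P = Q.
Proof. apply (qdist_def _ dCS_psm). Qed.
Lemma Sd_nonneg (P Q : S) : 0 <= mdist P Q.
Proof. apply (qdist_nonneg _ dCS_psm). Qed.

Lemma theta_dist_same m m' z n :
  @mdist G (theta m z n) (theta m' z n) = mdist (tens m n (z : I)) (tens m' n (z : I)).
Proof.
  unfold theta. rewrite G_dist_cls. rewrite (pG_tens n n m m' z z n) by lia.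
  rewrite (tens_ext n I (ext m n z) m), (tens_ext n I (ext m' n z) m'); auto;
  intros; apply ext_lt; auto.
Qed.

Lemma theta_dist_tail m z n k : (n <= k)%nat ->
  @mdist G (theta m z k) (theta m z n) <= (/ 2) ^ n.
Proof.
  intro H. unfold theta. rewrite G_dist_cls. rewrite (pG_tens k n m m z z k) by lia.
  apply (tens_agree k I I_met3 n). intros i Hi. rewrite !ext_lt by lia. reflexivity. auto.
Qed.

Lemma small_pow eps : 0 < eps -> exists n, (/ 2) ^ n < eps.
Proof.
  intro H. destruct (pow_lt_1_zero (/2) ltac:(rewrite Rabs_pos_eq; lra) eps H) as [N HN].
  exists N. specialize (HN N (le_n _)). rewrite Rabs_pos_eq in HN; auto. apply pow_le; lra.
Qed.

Lemma small_pow_ge eps N : 0 < eps -> exists n, (N <= n)%nat /\ (/ 2) ^ n < eps.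
Proof.
  intro H. destruct (pow_lt_1_zero (/2) ltac:(rewrite Rabs_pos_eq; lra) eps H) as [N0 HN].
  exists (Nat.max N N0). split. lia. specialize (HN (Nat.max N N0) ltac:(lia)).
  rewrite Rabs_pos_eq in HN; auto. apply pow_le; lra.
Qed.

Section Main.
Variable X : Met3.
Hypothesis HX : is_met3 X.
Variable e : X -> F X.
Hypothesis He : continuous e.
Hypothesis Hpe : preserves e.

Lemma FX_met3 : is_met3 (F X).
Proof. apply F_met3; auto. Qed.

Fixpoint xs_seq (x : X) (n : nat) : X :=
  match n with O => x | Datatypes.S k => snd (rep (e (xs_seq x k))) end.
Definition m_seq (x : X) (n : nat) : M3 := fst (rep (e (xs_seq x n))).

Lemma e_xs x n : e (xs_seq x n) = tensor (m_seq x n) (xs_seq x (Datatypes.S n)).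
Proof.
  unfold m_seq; simpl. unfold tensor. rewrite <- surjective_pairing. symmetry. apply cls_rep.
Qed.

Lemma chi_tens_gen x (m : nat -> M3) (xs : nat -> X) :
  xs O = x -> (forall n, e (xs n) = tensor (m n) (xs (Datatypes.S n))) ->
  forall n, chi e x n = tens m n (xs n).
Proof.
  intros H0 Hs. induction n.
  - simpl. auto.
  - simpl. rewrite IHn. rewrite (iter_tens n X (F X) e HX FX_met3 Hpe). rewrite Hs. reflexivity.
Qed.

Lemma decomp x : exists m xs, forall n, chi e x n = tens m n (xs n).
Proof.
  exists (m_seq x), (xs_seq x). apply chi_tens_gen; auto. apply e_xs.
Qed.

Lemma chi_cont n : @continuous X (Fiter n X) (fun x => chi e x n).
Proof.
  induction n.
  - intros x eps Heps. exists eps. split; auto.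
  - intros x eps Heps. simpl.
    destruct (iter_cont n X (F X) e HX FX_met3 Hpe He (chi e x n) eps Heps) as [d1 [Hd1 H1]].
    destruct (IHn x d1 Hd1) as [d2 [Hd2 H2]].
    exists d2. split; auto.
Qed.

Lemma key_est m m' (u v : X) n (z : P3) :
  mdist (tens m n (z : I)) (tens m' n (z : I)) <= 2 * (/ 2) ^ n + mdist (tens m n u) (tens m' n v).
Proof.
  pose proof (iter_isom n I W (hX I) I_met3 W_met3 (hX_preserves I I_met3) hI_isom) as Hiso.
  rewrite <- Hiso.
  rewrite !(iter_tens n I W (hX I) I_met3 W_met3 (hX_preserves I I_met3)).
  pose proof (Fiter_met3 n W W_met3) as HW.
  pose proof (md_tri _ HW (tens m n (hX I z)) (tens m n (hX X u)) (tens m' n (hX I z))).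
  pose proof (md_tri _ HW (tens m n (hX X u)) (tens m' n (hX X v)) (tens m' n (hX I z))).
  pose proof (tens_lip n W W_met3 m (hX I z) (hX X u)).
  pose proof (tens_lip n W W_met3 m' (hX X v) (hX I z)).
  pose proof (md_le1 W W_met3 (hX I z) (hX X u)).
  pose proof (md_le1 W W_met3 (hX X v) (hX I z)).
  pose proof (iter_nonexp n X W (hX X) HX W_met3 (hX_preserves X HX) (hX_nonexp X HX) (tens m n u) (tens m' n v)).
  rewrite !(iter_tens n X W (hX X) HX W_met3 (hX_preserves X HX)) in H5.
  pose proof (pow_le (/2) n ltac:(lra)).
  assert ((/ 2) ^ n * mdist (hX I z) (hX X u) <= (/2)^n) by (rewrite <- (Rmult_1_r ((/2)^n)) at 2; apply Rmult_le_compat_l; auto).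
  assert ((/ 2) ^ n * mdist (hX X v) (hX I z) <= (/2)^n) by (rewrite <- (Rmult_1_r ((/2)^n)) at 2; apply Rmult_le_compat_l; auto).
  lra.
Qed.

End Main.

Theorem mainTheorem7 (X : Met3) (e : X -> F X) (z : P3) (f : X -> S) :
  is_met3 X -> continuous e -> preserves e ->
  (forall (x : X) (m : nat -> M3) (xs : nat -> X),
     (forall n, chi e x n = tens m n (xs n)) ->
     forall eps, 0 < eps -> exists N, forall n, (N <= n)%nat ->
       @mdist S (jS (theta m z n)) (f x) < eps) ->
  continuous f /\ preserves f.
Proof.
  intros HX He Hpe Hf.
  pose proof S_psm as [S0 [Ss St]].
  assert (pres : forall (t : X) a (p : P3), e t = tensor a t -> sym3 p = a ->
            f t = jS (cls pG (Gel 0 (p : I)))).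
  { intros t a p Et Ea.
    assert (Hc : forall n, chi e t n = tens (fun _ => a) n ((fun _ => t) n))
      by (apply (chi_tens_gen X HX e Hpe); auto).
    symmetry. apply Sd_def. apply NNPP. intro Hne.
    set (g0 := cls pG (Gel 0 (p : I))) in *.
    pose proof (Sd_nonneg (jS g0) (f t)).
    set (d := @mdist S (jS g0) (f t)) in *.
    assert (0 < d) by (destruct H; auto; exfalso; apply Hne; auto).
    destruct (Hf t _ _ Hc (d / 2) ltac:(lra)) as [N HN].
    destruct (small_pow_ge (d / 2) N ltac:(lra)) as [n [Hn Hp]].
    specialize (HN n Hn).
    pose proof (St (jS g0) (jS (theta (fun _ => a) z n)) (f t)).
    rewrite S_dist_j in H1.
    assert (@mdist G g0 (theta (fun _ => a) z n) <= (/ 2) ^ n).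
    { unfold g0, theta. rewrite G_dist_cls.
      change (Gel 0 (p : I)) with (Gel 0 (tens (fun _ => a) 0 (p : I))).
      rewrite (pG_tens 0 n _ _ p z n) by lia.
      apply (tens_agree n I I_met3 n). intros i Hi. rewrite ext_ge by lia. rewrite ext_lt by lia.
      auto. lia. }
    fold d in H1. lra. }
  split.
  - intros x eps Heps.
    destruct (decomp X HX e Hpe x) as [m [xs Hx]].
    destruct (small_pow (eps / 8) ltac:(lra)) as [n Hn].
    destruct (chi_cont X HX e He Hpe n x (eps / 8) ltac:(lra)) as [d [Hd Hcd]].
    exists d. split; auto. intros y Hy.
    destruct (decomp X HX e Hpe y) as [m' [ys Hy']].
    specialize (Hcd y Hy). simpl in Hcd. rewrite Hx, Hy' in Hcd.
    destruct (Hf x m xs Hx (eps / 8) ltac:(lra)) as [N1 H1].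
    destruct (Hf y m' ys Hy' (eps / 8) ltac:(lra)) as [N2 H2].
    set (k := Nat.max n (Nat.max N1 N2)).
    specialize (H1 k ltac:(unfold k; lia)). specialize (H2 k ltac:(unfold k; lia)).
    pose proof (key_est X HX m m' (xs n) (ys n) n z) as K.
    pose proof (theta_dist_tail m z n k ltac:(unfold k; lia)) as T1.
    pose proof (theta_dist_tail m' z n k ltac:(unfold k; lia)) as T2.
    pose proof (theta_dist_same m m' z n) as T3.
    pose proof (Gd_tri (theta m z k) (theta m z n) (theta m' z k)) as G1.
    pose proof (Gd_tri (theta m z n) (theta m' z n) (theta m' z k)) as G2.
    rewrite (Gd_sym (theta m' z n) (theta m' z k)) in G2.
    pose proof (St (f x) (jS (theta m z k)) (f y)) as S1.
    pose proof (St (jS (theta m z k)) (jS (theta m' z k)) (f y)) as S2.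
    rewrite S_dist_j in S2. rewrite (Ss (f x) (jS (theta m z k))) in S1.
    lra.
  - split; [|split].
    + apply (pres _ ma T); auto. apply Hpe.
    + apply (pres _ mb L); auto. apply Hpe.
    + apply (pres _ mc Rp); auto. apply Hpe.
Qed.
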